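(* Let $\mathsf r:\phi\to\psi$ be a non-trivial linear inference among a nonempty set of variables $\mathcal{V}\neq\emptyset$ (the variables occurring in $\mathsf r$). Then there is a constant-free, negation-free, non-trivial linear inference $\mathsf r':\phi'\to\psi'$ with $\phi',\psi'$ linear formulae on $\mathcal{V}$, such that $\mathsf r$ is $\{\mathsf{s},\mathsf{m},\mathsf r'\}$-derivable with units.
   Context: Fix a countably infinite set of variables. Linear formulae on a finite set $\mathcal{V}$ of variables are defined inductively: - $\top,\bot$ are linear formulae on $\emptyset$. - $x$ and $\neg x$ are linear formulae on $\{x\}$. - If $\phi$ is on $\mathcal{V}_1$, $\psi$ is on $\mathcal{V}_2$ and $\mathcal{V}_1\cap\mathcal{V}_2=\emptyset$, then $\phi\lor\psi$ and $\phi\land\psi$ are on $\mathcal{V}_1\cup\mathcal{V}_2$. A formula is constant-free if it contains no $\top,\bot$, and negation-free if it contains no $\neg x$. Formulae are evaluated under Boolean assignments. A linear inference $\phi\to\psi$ is a pair of linear formulae such that every assignment satisfying $\phi$ satisfies $\psi$. An inference $\phi\to\psi$ is trivial at a variable $x$ if $\phi[\top/x]\to\psi[\bot/x]$ is valid; it is trivial if trivial at some variable, non-trivial otherwise. A congruence is an equivalence relation closed under $\land$- and $\lor$-contexts. - $\sim_{\mathsf{ac}}$ is the smallest congruence containing commutativity and associativity of $\land,\lor$. - $\sim_{\mathsf{u}}$ is the smallest congruence containing $\phi\land\top\sim\phi$, $\top\land\phi\sim\phi$, $\phi\lor\bot\sim\phi$, $\bot\lor\phi\sim\phi$, $\phi\land\bot\sim\bot$,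 $\bot\land\phi\sim\bot$, $\phi\lor\top\sim\top$, $\top\lor\phi\sim\top$. - $\sim_{\mathsf{acu}}$ is the smallest congruence containing both. For a set $S$ of linear inferences, $\to_S$ is the smallest relation containing $S$ and closed under substitution (of linear formulae for variables, keeping linearity) and contexts. $\phi\rightsquigarrow_{S\mathsf u}\psi$ means $\phi\sim_{\mathsf{acu}}\phi'\to_S\psi'\sim_{\mathsf{acu}}\psi$ for some $\phi',\psi'$. The inference $\phi\to\psi$ is $S$-derivable with units if $\phi,\psi$ are related by the reflexive-transitive closure of $\rightsquigarrow_{S\mathsf u}\cup\sim_{\mathsf{acu}}$. Switch $\mathsf{s}$ is $x\land(y\lor z)\to(x\land y)\lor z$; medial $\mathsf{m}$ is $(w\land x)\lor(y\land z)\to(w\lor y)\land(x\lor z)$. *)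

(* Defs.v *)
From Stdlib Require Import List Arith Relations.
Import ListNotations.

Inductive form : Type :=
| Top : form
| Bot : form
| Var : nat -> form
| NVar : nat -> form
| And : form -> form -> form
| Or : form -> form -> form.

Fixpoint vars (f : form) : list nat :=
  match f with
  | Top | Bot => []
  | Var x | NVar x => [x]
  | And a b | Or a b => vars a ++ vars b
  end.

(* linear: every variable occurs at most once (this is exactly the
   inductive definition: disjoint variable sets at each binary node) *)
Definition linear (f : form) : Prop := NoDup (vars f).

Definition on_vars (f : form) (V : list nat) : Prop :=
  forall x, In x (vars f) <-> In x V.

Fixpoint constant_free (f : form) : Prop :=
  match f with
  | Top | Bot => False
  | Var _ | NVar _ => True
  | And a b | Or a b => constant_free a /\ constant_free b
  end.

Fixpoint negation_free (f : form) : Prop :=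
  match f with
  | NVar _ => False
  | Top | Bot | Var _ => True
  | And a b | Or a b => negation_free a /\ negation_free b
  end.

Fixpoint eval (a : nat -> bool) (f : form) : bool :=
  match f with
  | Top => true
  | Bot => false
  | Var x => a x
  | NVar x => negb (a x)
  | And p q => andb (eval a p) (eval a q)
  | Or p q => orb (eval a p) (eval a q)
  end.

Fixpoint neg (f : form) : form :=
  match f with
  | Top => Bot
  | Bot => Top
  | Var x => NVar x
  | NVar x => Var x
  | And p q => Or (neg p) (neg q)
  | Or p q => And (neg p) (neg q)
  end.

Fixpoint subst (sigma : nat -> form) (f : form) : form :=
  match f with
  | Top => Top
  | Bot => Bot
  | Var x => sigma x
  | NVar x => neg (sigma x)
  | And p q => And (subst sigma p) (subst sigma q)
  | Or p q => Or (subst sigma p) (subst sigma q)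
  end.

Definition subst1 (x : nat) (t : form) (f : form) : form :=
  subst (fun y => if Nat.eqb y x then t else Var y) f.

Definition valid (phi psi : form) : Prop :=
  forall a : nat -> bool, eval a phi = true -> eval a psi = true.

Definition linear_inference (phi psi : form) : Prop :=
  linear phi /\ linear psi /\ valid phi psi.

Definition inf_vars (phi psi : form) : list nat := vars phi ++ vars psi.

Definition trivial_at (x : nat) (phi psi : form) : Prop :=
  valid (subst1 x Top phi) (subst1 x Bot psi).

Definition nontrivial (phi psi : form) : Prop :=
  forall x, In x (inf_vars phi psi) -> ~ trivial_at x phi psi.

Inductive acu : form -> form -> Prop :=
| acu_refl p : acu p p
| acu_sym p q : acu p q -> acu q p
| acu_trans p q r : acu p q -> acu q r -> acu p r
| acu_and p p' q q' : acu p p' -> acu q q' -> acu (And p q) (And p' q')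
| acu_or p p' q q' : acu p p' -> acu q q' -> acu (Or p q) (Or p' q')
| acu_and_comm p q : acu (And p q) (And q p)
| acu_or_comm p q : acu (Or p q) (Or q p)
| acu_and_assoc p q r : acu (And p (And q r)) (And (And p q) r)
| acu_or_assoc p q r : acu (Or p (Or q r)) (Or (Or p q) r)
| acu_and_top_r p : acu (And p Top) p
| acu_and_top_l p : acu (And Top p) p
| acu_or_bot_r p : acu (Or p Bot) p
| acu_or_bot_l p : acu (Or Bot p) p
| acu_and_bot_r p : acu (And p Bot) Bot
| acu_and_bot_l p : acu (And Bot p) Bot
| acu_or_top_r p : acu (Or p Top) Top
| acu_or_top_l p : acu (Or Top p) Top.

Inductive rewr (S : form -> form -> Prop) : form -> form -> Prop :=
| rewr_inst phi psi (sigma : nat -> form) :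
    S phi psi -> linear (subst sigma phi) -> linear (subst sigma psi) ->
    rewr S (subst sigma phi) (subst sigma psi)
| rewr_and_l p p' c :
    rewr S p p' -> linear (And p c) -> linear (And p' c) ->
    rewr S (And p c) (And p' c)
| rewr_and_r p p' c :
    rewr S p p' -> linear (And c p) -> linear (And c p') ->
    rewr S (And c p) (And c p')
| rewr_or_l p p' c :
    rewr S p p' -> linear (Or p c) -> linear (Or p' c) ->
    rewr S (Or p c) (Or p' c)
| rewr_or_r p p' c :
    rewr S p p' -> linear (Or c p) -> linear (Or c p') ->
    rewr S (Or c p) (Or c p').

Definition rewr_u (S : form -> form -> Prop) (phi psi : form) : Prop :=
  exists phi' psi', acu phi phi' /\ rewr S phi' psi' /\ acu psi' psi.

Definition derivable_u (S : form -> form -> Prop) (phi psi : form) : Prop :=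
  clos_refl_trans form (fun a b => rewr_u S a b \/ acu a b) phi psi.

Definition switch_l : form := And (Var 0) (Or (Var 1) (Var 2)).
Definition switch_r : form := Or (And (Var 0) (Var 1)) (Var 2).
Definition medial_l : form := Or (And (Var 0) (Var 1)) (And (Var 2) (Var 3)).
Definition medial_r : form := And (Or (Var 0) (Var 2)) (Or (Var 1) (Var 3)).

Definition smr (phi' psi' : form) (p q : form) : Prop :=
  (p = switch_l /\ q = switch_r) \/
  (p = medial_l /\ q = medial_r) \/
  (p = phi' /\ q = psi').

(* Main.v *)
Require Import Defs.
From Stdlib Require Import List Arith Bool Relations.
Import ListNotations.

Lemma nd_app_l (l l' : list nat) : NoDup (l ++ l') -> NoDup l.
Proof. apply NoDup_app_remove_r. Qed.
Lemma nd_app_r (l l' : list nat) : NoDup (l ++ l') -> NoDup l'.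
Proof. apply NoDup_app_remove_l. Qed.
Lemma nd_disj (l l' : list nat) x : NoDup (l ++ l') -> In x l -> In x l' -> False.
Proof.
  induction l as [|y l IH]; simpl; intros H H1 H2; [easy|].
  inversion H as [|? ? Hn Hnd]; subst. destruct H1 as [->|H1].
  - apply Hn. apply in_app_iff. right; exact H2.
  - eauto.
Qed.
Lemma nd_app_intro (l l' : list nat) :
  NoDup l -> NoDup l' -> (forall x, In x l -> In x l' -> False) -> NoDup (l ++ l').
Proof.
  induction l as [|y l IH]; simpl; intros H H' D; [easy|].
  inversion H; subst. constructor.
  - rewrite in_app_iff. intros [A|A]; [tauto|]. eapply D; eauto.
  - apply IH; auto. intros x A B; eapply D; eauto.
Qed.

Fixpoint pvars (f : form) : list nat :=
  match f with
  | Var x => [x]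
  | Top | Bot | NVar _ => []
  | And a b | Or a b => pvars a ++ pvars b
  end.
Fixpoint nvars (f : form) : list nat :=
  match f with
  | NVar x => [x]
  | Top | Bot | Var _ => []
  | And a b | Or a b => nvars a ++ nvars b
  end.

Lemma vars_split f x : In x (vars f) <-> In x (pvars f) \/ In x (nvars f).
Proof.
  induction f; simpl; rewrite ?in_app_iff; try tauto;
  rewrite IHf1, IHf2; tauto.
Qed.

Lemma linear_pn f x : linear f -> In x (pvars f) -> In x (nvars f) -> False.
Proof.
  unfold linear. induction f; simpl; try tauto;
  intros L Hp Hn; rewrite in_app_iff in Hp, Hn;
  pose proof (nd_app_l _ _ L); pose proof (nd_app_r _ _ L);
  destruct Hp as [Hp|Hp]; destruct Hn as [Hn|Hn]; eauto;
  (eapply nd_disj; [exact L| |]; apply vars_split; eauto).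
Qed.

Definition upd (a : nat -> bool) x c : nat -> bool := fun y => if Nat.eqb y x then c else a y.

Lemma eval_neg a f : eval a (neg f) = negb (eval a f).
Proof.
  induction f; simpl; rewrite ?IHf1, ?IHf2; try reflexivity.
  - now rewrite negb_involutive.
  - now rewrite negb_andb.
  - now rewrite negb_orb.
Qed.

Lemma eval_subst a s f : eval a (subst s f) = eval (fun y => eval a (s y)) f.
Proof. induction f; simpl; rewrite ?IHf1, ?IHf2, ?eval_neg; reflexivity. Qed.

Lemma eval_ext a b f : (forall y, a y = b y) -> eval a f = eval b f.
Proof. intros H; induction f; simpl; rewrite ?IHf1, ?IHf2, ?H; reflexivity. Qed.

Lemma subst_id f : subst Var f = f.
Proof. induction f; simpl; rewrite ?IHf1, ?IHf2; reflexivity. Qed.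

Lemma triv_iff x phi psi : trivial_at x phi psi <->
  (forall a, eval (upd a x true) phi = true -> eval (upd a x false) psi = true).
Proof.
  unfold trivial_at, valid, subst1.
  assert (K : forall a (t : form) (c : bool), eval a t = c ->
     forall f, eval a (subst (fun y => if Nat.eqb y x then t else Var y) f) = eval (upd a x c) f).
  { intros a t c Ht f. rewrite eval_subst. apply eval_ext. intros y; unfold upd.
    destruct (Nat.eqb y x); simpl; auto. }
  split; intros H a.
  - specialize (H a). rewrite (K a Top true), (K a Bot false) in H by reflexivity. exact H.
  - rewrite (K a Top true), (K a Bot false) by reflexivity. apply H.
Qed.

Lemma indep f x a c : ~ In x (vars f) -> eval (upd a x c) f = eval a f.
Proof.
  induction f; simpl; rewrite ?in_app_iff; intros N; try reflexivity.
  - unfold upd. destruct (Nat.eqb n x) eqn:E; [apply Nat.eqb_eq in E; tauto|reflexivity].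
  - unfold upd. destruct (Nat.eqb n x) eqn:E; [apply Nat.eqb_eq in E; tauto|reflexivity].
  - rewrite IHf1, IHf2; tauto.
  - rewrite IHf1, IHf2; tauto.
Qed.

Lemma anti f x a : ~ In x (pvars f) -> eval (upd a x true) f = true -> eval (upd a x false) f = true.
Proof.
  induction f; simpl; rewrite ?in_app_iff; intros N; auto.
  - unfold upd. destruct (Nat.eqb n x) eqn:E; [apply Nat.eqb_eq in E; tauto|auto].
  - unfold upd. destruct (Nat.eqb n x) eqn:E; simpl; auto.
  - rewrite !andb_true_iff; intuition.
  - rewrite !orb_true_iff; intuition.
Qed.

Lemma acu_sound p q : acu p q -> forall a, eval a p = eval a q.
Proof.
  induction 1; intro a; simpl;
  try (rewrite IHacu1, IHacu2; reflexivity);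
  try (rewrite IHacu; reflexivity);
  repeat match goal with |- context [eval ?b ?f] => destruct (eval b f) end; reflexivity.
Qed.

Definition mkAnd p q :=
  match p, q with
  | Top, _ => q | Bot, _ => Bot | _, Top => p | _, Bot => Bot | _, _ => And p q end.
Definition mkOr p q :=
  match p, q with
  | Bot, _ => q | Top, _ => Top | _, Bot => p | _, Top => Top | _, _ => Or p q end.
Fixpoint nf f :=
  match f with
  | And a b => mkAnd (nf a) (nf b)
  | Or a b => mkOr (nf a) (nf b)
  | _ => f
  end.

Lemma nf_acu f : acu f (nf f).
Proof.
  induction f; simpl; try apply acu_refl.
  - eapply acu_trans; [apply acu_and; eauto|].
    destruct (nf f1), (nf f2); simpl; first [apply acu_refl|apply acu_and_top_l|apply acu_and_top_r|apply acu_and_bot_l|apply acu_and_bot_r|apply acu_or_top_l|apply acu_or_top_r|apply acu_or_bot_l|apply acu_or_bot_r].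
  - eapply acu_trans; [apply acu_or; eauto|].
    destruct (nf f1), (nf f2); simpl; first [apply acu_refl|apply acu_and_top_l|apply acu_and_top_r|apply acu_and_bot_l|apply acu_and_bot_r|apply acu_or_top_l|apply acu_or_top_r|apply acu_or_bot_l|apply acu_or_bot_r].
Qed.

Definition shape f := f = Top \/ f = Bot \/ constant_free f.
Lemma nf_shape f : shape (nf f).
Proof.
  unfold shape; induction f; simpl; auto.
  - destruct IHf1 as [H1|[H1|H1]]; destruct IHf2 as [H2|[H2|H2]];
    destruct (nf f1), (nf f2); simpl in *; try discriminate; tauto.
  - destruct IHf1 as [H1|[H1|H1]]; destruct IHf2 as [H2|[H2|H2]];
    destruct (nf f1), (nf f2); simpl in *; try discriminate; tauto.
Qed.

Lemma nf_incl f : incl (vars (nf f)) (vars f).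
Proof.
  induction f; simpl; try apply incl_refl.
  - intros x Hx. apply in_app_iff.
    assert (In x (vars (nf f1)) \/ In x (vars (nf f2))) as [A|A]; [|left; auto|right; auto].
    destruct (nf f1), (nf f2); simpl in *; rewrite ?in_app_iff in *; tauto.
  - intros x Hx. apply in_app_iff.
    assert (In x (vars (nf f1)) \/ In x (vars (nf f2))) as [A|A]; [|left; auto|right; auto].
    destruct (nf f1), (nf f2); simpl in *; rewrite ?in_app_iff in *; tauto.
Qed.

Lemma nf_linear f : linear f -> linear (nf f).
Proof.
  unfold linear; induction f; simpl; auto; intros L;
  pose proof (IHf1 (nd_app_l _ _ L)) as A; pose proof (IHf2 (nd_app_r _ _ L)) as B;
  assert (D : NoDup (vars (nf f1) ++ vars (nf f2)))
    by (apply nd_app_intro; auto; intros x X Y; eapply nd_disj;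
        [exact L|apply nf_incl; exact X|apply nf_incl; exact Y]);
  destruct (nf f1), (nf f2); simpl in *; auto.
Qed.

Lemma nf_eval f a : eval a (nf f) = eval a f.
Proof. symmetry; apply acu_sound, nf_acu. Qed.

Lemma nf_free f : (forall x, ~ In x (nvars f)) -> negation_free f.
Proof.
  induction f; simpl; intros H; auto.
  - apply (H n); left; reflexivity.
  - split; [apply IHf1|apply IHf2]; intros x X; apply (H x); apply in_app_iff; auto.
  - split; [apply IHf1|apply IHf2]; intros x X; apply (H x); apply in_app_iff; auto.
Qed.

Theorem proposition2p16 (phi psi : form) :
  linear_inference phi psi ->
  nontrivial phi psi ->
  inf_vars phi psi <> nil ->
  exists phi' psi' : form,
    constant_free phi' /\ constant_free psi' /\
    negation_free phi' /\ negation_free psi' /\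
    linear_inference phi' psi' /\ nontrivial phi' psi' /\
    on_vars phi' (inf_vars phi psi) /\ on_vars psi' (inf_vars phi psi) /\
    derivable_u (smr phi' psi') phi psi.
Proof.
  intros [Lphi [Lpsi Vd]] NT Hne.
  pose proof (nf_linear _ Lphi) as L1. pose proof (nf_linear _ Lpsi) as L2.
  pose proof (nf_incl phi) as I1. pose proof (nf_incl psi) as I2.
  assert (A : forall x, In x (inf_vars phi psi) -> In x (vars (nf phi)) /\ In x (vars (nf psi))).
  { intros x Hx. split.
    - destruct (in_dec Nat.eq_dec x (vars (nf phi))) as [|n]; auto. exfalso.
      apply (NT x Hx). apply triv_iff. intros a Ha. apply Vd.
      rewrite <- nf_eval, indep by exact n. rewrite <- nf_eval, indep in Ha by exact n. exact Ha.
    - destruct (in_dec Nat.eq_dec x (vars (nf psi))) as [|n]; auto. exfalso.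
      apply (NT x Hx). apply triv_iff. intros a Ha.
      rewrite <- nf_eval, indep by exact n. rewrite <- (indep _ x a true n), nf_eval.
      apply Vd; exact Ha. }
  assert (Hx0 : exists x0, In x0 (inf_vars phi psi)).
  { destruct (inf_vars phi psi) as [|x0 l]; [congruence|exists x0; left; reflexivity]. }
  destruct Hx0 as [x0 Hx0].
  assert (CF1 : constant_free (nf phi)).
  { destruct (nf_shape phi) as [H|[H|H]]; auto; exfalso;
    destruct (A x0 Hx0) as [B _]; rewrite H in B; exact B. }
  assert (CF2 : constant_free (nf psi)).
  { destruct (nf_shape psi) as [H|[H|H]]; auto; exfalso;
    destruct (A x0 Hx0) as [_ B]; rewrite H in B; exact B. }
  assert (VX : forall x, In x (inf_vars (nf phi) (nf psi)) -> In x (inf_vars phi psi)).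
  { unfold inf_vars; intros x; rewrite !in_app_iff; intros [B|B]; [left; apply I1|right; apply I2]; auto. }
  assert (N1 : forall x, ~ In x (nvars (nf phi))).
  { intros x Hn.
    assert (Hv : In x (vars (nf phi))) by (apply vars_split; auto).
    apply (NT x). { apply VX; unfold inf_vars; apply in_app_iff; auto. }
    apply triv_iff; intros a Ha. apply Vd. rewrite <- nf_eval. apply anti.
    - intros Hp; exact (linear_pn _ _ L1 Hp Hn).
    - rewrite nf_eval; exact Ha. }
  assert (N2 : forall x, ~ In x (nvars (nf psi))).
  { intros x Hn.
    assert (Hv : In x (vars (nf psi))) by (apply vars_split; auto).
    apply (NT x). { apply VX; unfold inf_vars; apply in_app_iff; auto. }
    apply triv_iff; intros a Ha. rewrite <- nf_eval. apply anti.
    - intros Hp; exact (linear_pn _ _ L2 Hp Hn).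
    - rewrite nf_eval; apply Vd; exact Ha. }
  exists (nf phi), (nf psi).
  split; [exact CF1|]. split; [exact CF2|].
  split; [apply nf_free; exact N1|]. split; [apply nf_free; exact N2|].
  split. { split; [exact L1|split; [exact L2|]]. intros a Ha.
    rewrite nf_eval in *; apply Vd; exact Ha. }
  split. { intros x Hx T. apply (NT x (VX x Hx)). apply triv_iff.
    rewrite triv_iff in T. intros a Ha. rewrite <- nf_eval. apply T.
    rewrite nf_eval; exact Ha. }
  split. { intros x; split; [intros B; unfold inf_vars; apply in_app_iff; left; apply I1; exact B|].
    intros B; apply (A x B). }
  split. { intros x; split; [intros B; unfold inf_vars; apply in_app_iff; right; apply I2; exact B|].
    intros B; apply (A x B). }
  apply rt_step. left. exists (nf phi), (nf psi). split; [apply nf_acu|]. split.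
  - pose proof (rewr_inst (smr (nf phi) (nf psi)) (nf phi) (nf psi) Var
      (or_intror (or_intror (conj eq_refl eq_refl)))) as H.
    rewrite !subst_id in H. apply H; assumption.
  - apply acu_sym, nf_acu.
Qed.
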